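(* Let $P(t,q)=\log\big(\sum_{n=1}^\infty2^{-nt}n^q\big)$ on $D=\{(t,q): t>0,\ \text{or}\ t=0,\ q<-1\}$, let $\tilde D=\{(t,q)\in D:0\le t\le1\}$, and let $\xi_0=\int_0^1\log\lceil-\log_2x\rceil\,dx$. For $\xi>0$ let $(t(\xi),q(\xi))\in\tilde D$ be the unique solution in $\tilde D$ of the system $P(t,q)=q\xi$, $\frac{\partial P}{\partial q}(t,q)=\xi$. Then $q(\xi)<0$ for $0<\xi<\xi_0$, $q(\xi_0)=0$, and $q(\xi)>0$ for $\xi>\xi_0$.
   Context: It is part of the setting (taken from the paper) that for every $\xi>0$ the system has a unique solution in $\tilde D$, that this solution is $(1,0)$ for $\xi=\xi_0$, and that $\frac{\partial P}{\partial q}(1,0)=\xi_0$. *)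

(* Defs.v *)
From Stdlib Require Import Reals.
From Coquelicot Require Import Coquelicot.
Open Scope R_scope.

Definition Rceil (x : R) : R := - IZR (Int_part (- x)).

Definition log2 (x : R) : R := ln x / ln 2.

Definition P (t q : R) : R :=
  ln (Series (fun n : nat => Rpower 2 (- (INR (S n)) * t) * Rpower (INR (S n)) q)).

Definition inD (t q : R) : Prop := 0 < t \/ (t = 0 /\ q < -1).

Definition inDtilde (t q : R) : Prop := inD t q /\ 0 <= t <= 1.

Definition xi0_integrand (x : R) : R := ln (Rceil (- log2 x)).

Definition solves (xi t q : R) : Prop :=
  P t q = q * xi /\ is_derive (fun s => P t s) q xi.

(* Main.v *)
Require Import Defs.
From Stdlib Require Import Reals Lra Lia Classical.
From Coquelicot Require Import Coquelicot.
Open Scope R_scope.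
From Stdlib Require Import Lra Lia.

Definition T (t q : R) (n : nat) : R :=
  Rpower 2 (- (INR (S n)) * t) * Rpower (INR (S n)) q.

Lemma INRS_pos n : 0 < INR (S n).
Proof. apply lt_0_INR; lia. Qed.

Lemma T_exp t q n : T t q n = exp (- INR (S n) * t * ln 2 + q * ln (INR (S n))).
Proof. unfold T, Rpower. rewrite exp_plus. reflexivity. Qed.

Lemma T_pos t q n : 0 < T t q n.
Proof. rewrite T_exp. apply exp_pos. Qed.

Lemma exp_INR_mul n x : exp (INR n * x) = exp x ^ n.
Proof.
  induction n as [|n IH].
  - simpl. rewrite Rmult_0_l, exp_0; reflexivity.
  - rewrite S_INR, <- tech_pow_Rmult, Rmult_plus_distr_r, Rmult_1_l, exp_plus, IH; ring.
Qed.

Lemma exp_le_mono x y : x <= y -> exp x <= exp y.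
Proof. intros [H|H]; [left; apply exp_increasing; auto | subst; lra]. Qed.

Lemma ln_le_mono x y : 0 < x -> x <= y -> ln x <= ln y.
Proof. intros Hx [H|H]; [left; apply ln_increasing; auto | subst; lra]. Qed.

Lemma ex_series_geom_scaled (c r : R) : 0 <= r < 1 ->
  ex_series (fun n => c * (r * r ^ n)).
Proof.
  intros Hr.
  assert (H := is_series_geom r ltac:(rewrite Rabs_right; lra)).
  apply (is_series_scal_l (c * r)) in H.
  eexists. eapply is_series_ext; [|exact H].
  intros n; simpl. unfold scal; simpl; unfold mult; simpl. ring.
Qed.

Lemma ln_bound (y e : R) : 0 < y -> 0 < e -> ln y <= e * y - 1 - ln e.
Proof.
  intros Hy He. assert (H := exp_ineq1_le (ln (e * y))).
  rewrite exp_ln in H by (apply Rmult_lt_0_compat; auto).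
  rewrite ln_mult in H by auto. lra.
Qed.

Lemma T_ex_series t q : 0 < t -> ex_series (T t q).
Proof.
  intros Ht.
  set (a := t * ln 2 / 2).
  assert (Hl2 : 0 < ln 2) by (rewrite <- ln_1; apply ln_increasing; lra).
  assert (Ha : 0 < a) by (unfold a; apply Rmult_lt_0_compat; [apply Rmult_lt_0_compat|]; lra).
  set (e := a / (Rabs q + 1)).
  assert (Hq := Rabs_pos q).
  assert (He : 0 < e) by (unfold e; apply Rdiv_lt_0_compat; lra).
  set (K := Rabs q * Rabs (1 + ln e)).
  apply (@ex_series_le R_AbsRing R_CompleteNormedModule _ (fun n => exp K * (exp (- a) * exp (-a) ^ n))).
  2:{ apply ex_series_geom_scaled. split. left; apply exp_pos.
      rewrite <- exp_0. apply exp_increasing. lra. }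
  intros n. unfold norm; simpl. unfold abs; simpl.
  rewrite Rabs_right by (left; apply T_pos).
  replace (exp K * (exp (- a) * exp (- a) ^ n)) with (exp (K + INR (S n) * (- a))).
  2:{ rewrite exp_plus, exp_INR_mul. simpl. ring. }
  rewrite T_exp. apply exp_le_mono.
  set (y := INR (S n)).
  assert (Hy1 : 1 <= y) by (unfold y; rewrite S_INR; assert (H0 := pos_INR n); lra).
  assert (Hly : 0 <= ln y) by (rewrite <- ln_1; apply ln_le_mono; lra).
  assert (Hb := ln_bound y e ltac:(lra) He).
  assert (H1 : q * ln y <= Rabs q * ln y).
  { apply Rmult_le_compat_r; [lra| apply Rle_abs]. }
  assert (H2 : Rabs q * ln y <= Rabs q * (e * y - 1 - ln e)).
  { apply Rmult_le_compat_l; lra. }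
  assert (H3 : Rabs q * e <= a).
  { unfold e. unfold Rdiv. rewrite <- Rmult_assoc, (Rmult_comm (Rabs q) a), Rmult_assoc.
    rewrite <- (Rmult_1_r a) at 2. apply Rmult_le_compat_l; [lra|].
    apply (Rmult_le_reg_r (Rabs q + 1)); [lra|].
    rewrite Rmult_assoc, Rinv_l by lra. lra. }
  assert (H4 : Rabs q * (-1 - ln e) <= K).
  { unfold K. apply Rmult_le_compat_l; [lra|].
    rewrite <- Rabs_Ropp. replace (- (1 + ln e)) with (-1 - ln e) by ring. apply Rle_abs. }
  assert (H5 : Rabs q * e * y <= a * y) by (apply Rmult_le_compat_r; lra).
  assert (Ht2 : t * ln 2 = 2 * a) by (unfold a; field).
  nra.
Qed.

Lemma Series_zero : Series (fun _ => 0) = 0.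
Proof.
  rewrite (Series_ext _ (fun n => 0 * 0)) by (intros; ring).
  rewrite Series_scal_l. ring.
Qed.

Lemma Series_pos (a : nat -> R) : ex_series a -> (forall n, 0 < a n) -> 0 < Series a.
Proof.
  intros Ha Hp. rewrite Series_incr_1 by auto.
  assert (0 <= Series (fun k => a (S k))).
  { rewrite <- Series_zero. apply Series_le.
    - intros n; split; [lra| left; apply Hp].
    - exact (proj1 (ex_series_incr_1 a) Ha). }
  specialize (Hp 0%nat). lra.
Qed.

Lemma Series_div (a : nat -> R) : (forall n, 0 <= a n) -> ~ ex_series a -> Series a = 0.
Proof.
  intros Hp Hn. unfold Series.
  assert (Hl : ex_lim_seq (sum_n a)).
  { apply ex_lim_seq_incr. intros n. rewrite sum_Sn. unfold plus; simpl. specialize (Hp (S n)). lra. }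
  apply Lim_seq_correct in Hl.
  destruct (Lim_seq (sum_n a)) as [l| |] eqn:E; simpl; auto.
  exfalso. apply Hn. exists l. exact Hl.
Qed.

Lemma T_mono t q n : t <= 1 -> T 1 q n <= T t q n.
Proof.
  intros Ht. rewrite !T_exp. apply exp_le_mono.
  assert (Hl2 : 0 < ln 2) by (rewrite <- ln_1; apply ln_increasing; lra).
  assert (H := INRS_pos n).
  assert (INR (S n) * t * ln 2 <= INR (S n) * 1 * ln 2).
  { apply Rmult_le_compat_r; [lra|]. apply Rmult_le_compat_l; lra. }
  lra.
Qed.

Lemma P_mono t q : t <= 1 -> ex_series (T t q) ->
  ln (Series (T 1 q)) <= ln (Series (T t q)).
Proof.
  intros Ht He. apply ln_le_mono.
  - apply Series_pos. apply T_ex_series; lra. apply T_pos.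
  - apply Series_le; auto. intros n; split; [left; apply T_pos| apply T_mono; auto].
Qed.

Lemma Series_T10 : Series (T 1 0) = 1.
Proof.
  assert (H := is_series_geom (/2) ltac:(rewrite Rabs_right; lra)).
  apply (is_series_scal_l (/2)) in H.
  apply is_series_unique in H.
  unfold scal in H; simpl in H; unfold mult in H; simpl in H.
  transitivity (/ 2 * / (1 - / 2)); [|field].
  rewrite <- H. apply Series_ext. intros n.
  unfold T. rewrite Rpower_O by apply INRS_pos. rewrite Rmult_1_r.
  replace (- INR (S n) * 1) with (- INR (S n)) by ring.
  rewrite Rpower_Ropp, Rpower_pow by lra.
  rewrite pow_inv. simpl. field. apply pow_nonzero. lra.
Qed.

Lemma young s u v : 0 <= s <= 1 ->
  exp (s * u + (1 - s) * v) <= s * exp u + (1 - s) * exp v.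
Proof.
  intros Hs. set (m := s * u + (1 - s) * v).
  assert (Hu : exp u = exp m * exp (u - m)) by (rewrite <- exp_plus; f_equal; ring).
  assert (Hv : exp v = exp m * exp (v - m)) by (rewrite <- exp_plus; f_equal; ring).
  assert (H1 := exp_ineq1_le (u - m)). assert (H2 := exp_ineq1_le (v - m)).
  assert (Hm := exp_pos m).
  rewrite Hu, Hv.
  assert (s * exp m * (1 + (u - m)) <= s * exp m * exp (u - m)).
  { apply Rmult_le_compat_l; [nra| lra]. }
  assert ((1 - s) * exp m * (1 + (v - m)) <= (1 - s) * exp m * exp (v - m)).
  { apply Rmult_le_compat_l; [nra| lra]. }
  assert (s * exp m * (1 + (u - m)) + (1 - s) * exp m * (1 + (v - m)) = exp m)
    by (unfold m; ring).
  nra.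
Qed.

Lemma holder t q s : 0 < t -> 0 <= s <= 1 ->
  ln (Series (T t (s * q))) <= s * ln (Series (T t q)) + (1 - s) * ln (Series (T t 0)).
Proof.
  intros Ht Hs.
  set (A := Series (T t q)). set (B := Series (T t 0)).
  assert (HA : 0 < A) by (apply Series_pos; [apply T_ex_series; auto| apply T_pos]).
  assert (HB : 0 < B) by (apply Series_pos; [apply T_ex_series; auto| apply T_pos]).
  set (al := ln A). set (be := ln B).
  set (E := exp (s * al + (1 - s) * be)).
  set (K1 := E * s / A). set (K2 := E * (1 - s) / B).
  assert (Hle : Series (T t (s * q)) <= Series (fun n => K1 * T t q n + K2 * T t 0 n)).
  { apply Series_le.
    - intros n; split; [left; apply T_pos|].
      rewrite !T_exp.
      set (c := - INR (S n) * t * ln 2). set (L := ln (INR (S n))).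
      set (u := c + q * L - al). set (v := c + 0 * L - be).
      assert (E1 : exp (c + s * q * L) = E * exp (s * u + (1 - s) * v)).
      { unfold E. rewrite <- exp_plus. f_equal. unfold u, v. ring. }
      assert (E2 : K1 * exp (c + q * L) = E * (s * exp u)).
      { unfold K1, u. unfold Rminus. rewrite (exp_plus (c + q * L) (- al)), exp_Ropp. unfold al. rewrite exp_ln by auto.
        field. lra. }
      assert (E3 : K2 * exp (c + 0 * L) = E * ((1 - s) * exp v)).
      { unfold K2, v. unfold Rminus. rewrite (exp_plus (c + 0 * L) (- be)), exp_Ropp. unfold be. rewrite exp_ln by auto.
        field. lra. }
      rewrite E1, E2, E3, <- Rmult_plus_distr_l.
      apply Rmult_le_compat_l; [left; apply exp_pos|]. apply young; auto.
    - apply (@ex_series_ext R_AbsRing R_NormedModule (fun n => plus (scal K1 (T t q n)) (scal K2 (T t 0 n)))).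
      { intros n. reflexivity. }
      apply (@ex_series_plus R_AbsRing R_NormedModule); apply (@ex_series_scal_l R_AbsRing R_NormedModule); apply T_ex_series; auto. }
  rewrite Series_plus in Hle.
  2: apply (@ex_series_ext R_AbsRing R_NormedModule (fun n => scal K1 (T t q n))); [intros; reflexivity|];
       apply (@ex_series_scal_l R_AbsRing R_NormedModule); apply T_ex_series; auto.
  2: apply (@ex_series_ext R_AbsRing R_NormedModule (fun n => scal K2 (T t 0 n))); [intros; reflexivity|];
       apply (@ex_series_scal_l R_AbsRing R_NormedModule); apply T_ex_series; auto.
  rewrite !Series_scal_l in Hle. fold A B in Hle.
  assert (K1 * A + K2 * B = E) by (unfold K1, K2; field; lra).
  rewrite H in Hle.
  apply ln_le_mono in Hle.
  2:{ apply Series_pos; [apply T_ex_series; auto| apply T_pos]. }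
  unfold E in Hle. rewrite ln_exp in Hle. exact Hle.
Qed.

Lemma tangent (f : R -> R) l : derivable_pt_lim f 0 l ->
  (forall q s, 0 < s < 1 -> f (s * q) <= s * f q + (1 - s) * f 0) ->
  forall q, f 0 + l * q <= f q.
Proof.
  intros Hd Hc q.
  destruct (Rle_or_lt (f 0 + l * q) (f q)) as [H|H]; auto. exfalso.
  destruct (Req_dec q 0) as [Hq0|Hq0].
  { subst. rewrite Rmult_0_r, Rplus_0_r in H. lra. }
  set (D := f 0 + l * q - f q).
  assert (HD : 0 < D) by (unfold D; lra).
  assert (Haq : 0 < Rabs q) by (apply Rabs_pos_lt; auto).
  destruct (Hd (D / Rabs q / 2) ltac:(apply Rmult_lt_0_compat; [apply Rdiv_lt_0_compat|]; lra)) as [del Hdel].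
  set (s := Rmin (1/2) (del / Rabs q / 2)).
  assert (Hdp := cond_pos del).
  assert (Hs0 : 0 < s).
  { unfold s. apply Rmin_glb_lt; [lra|]. apply Rmult_lt_0_compat; [apply Rdiv_lt_0_compat|]; lra. }
  assert (Hs1 : s < 1) by (unfold s; assert (H1 := Rmin_l (1/2) (del / Rabs q / 2)); lra).
  assert (Hsd : s * Rabs q < del).
  { assert (H1 := Rmin_r (1/2) (del / Rabs q / 2)). fold s in H1.
    apply Rle_lt_trans with (del / Rabs q / 2 * Rabs q).
    apply Rmult_le_compat_r; lra.
    replace (del / Rabs q / 2 * Rabs q) with (del / 2) by (field; lra). lra. }
  assert (Hh0 : s * q <> 0) by (apply Rmult_integral_contrapositive; split; lra).
  assert (Hhd : Rabs (s * q) < del) by (rewrite Rabs_mult, (Rabs_right s) by lra; lra).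
  specialize (Hdel (s * q) Hh0 Hhd).
  rewrite Rplus_0_l in Hdel.
  specialize (Hc q s (conj Hs0 Hs1)).
  set (N := f (s * q) - f 0 - l * (s * q)).
  assert (HN : N <= - (s * D)) by (unfold N, D; nra).
  replace ((f (s * q) - f 0) / (s * q) - l) with (N / (s * q)) in Hdel by (unfold N; field; auto; lra).
  rewrite Rabs_div in Hdel by auto. rewrite Rabs_mult, (Rabs_right s) in Hdel by lra.
  rewrite (Rabs_left1 N) in Hdel by nra.
  apply (Rmult_lt_compat_r (s * Rabs q)) in Hdel; [|nra].
  unfold Rdiv in Hdel. rewrite Rmult_assoc, Rinv_l in Hdel by nra.
  replace (D * / Rabs q * / 2 * (s * Rabs q)) with (s * D / 2) in Hdel by (field; lra).
  nra.
Qed.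

Lemma ln2_pos : 0 < ln 2.
Proof. rewrite <- ln_1; apply ln_increasing; lra. Qed.

Lemma S1_lower s : 0 <= s -> 1 + s * ln 2 / 4 <= Series (T 1 s).
Proof.
  intros Hs.
  assert (E1 : ex_series (T 1 s)) by (apply T_ex_series; lra).
  assert (E0 : ex_series (T 1 0)) by (apply T_ex_series; lra).
  assert (Hdec : forall q, ex_series (T 1 q) -> Series (T 1 q) =
     T 1 q 0 + (T 1 q 1 + Series (fun k => T 1 q (S (S k))))).
  { intros q Hq. rewrite Series_incr_1 by auto. f_equal.
    rewrite (Series_incr_1 (fun k => T 1 q (S k))). reflexivity.
    exact (proj1 (ex_series_incr_1 _) Hq). }
  assert (Htail : Series (fun k => T 1 0 (S (S k))) <= Series (fun k => T 1 s (S (S k)))).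
  { apply Series_le.
    - intros n; split; [left; apply T_pos|]. rewrite !T_exp. apply exp_le_mono.
      assert (0 <= ln (INR (S (S (S n))))).
      { rewrite <- ln_1. apply ln_le_mono; [lra|]. rewrite S_INR. assert (H := INRS_pos (S n)). lra. }
      nra.
    - exact (proj1 (ex_series_incr_1 (fun k => T 1 s (S k))) (proj1 (ex_series_incr_1 _) E1)). }
  assert (H0 := Series_T10). rewrite (Hdec 0 E0) in H0. rewrite (Hdec s E1).
  assert (Ht0 : T 1 s 0 = T 1 0 0).
  { rewrite !T_exp. replace (INR 1) with 1 by reflexivity. rewrite ln_1. f_equal; ring. }
  assert (Ht1 : T 1 s 1 = T 1 0 1 * exp (s * ln 2)).
  { rewrite !T_exp. rewrite <- exp_plus. f_equal. replace (INR 2) with 2 by (simpl; ring). ring. }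
  assert (Hq : T 1 0 1 = / 4).
  { rewrite T_exp. replace (INR 2) with 2 by (simpl; ring).
    match goal with |- exp ?e = _ => replace e with (- (ln 2 + ln 2)) by ring end.
    rewrite exp_Ropp, exp_plus, exp_ln by lra. field. }
  assert (He := exp_ineq1_le (s * ln 2)).
  rewrite Ht0, Ht1, Hq. rewrite Hq in H0. nra.
Qed.

Lemma xi0_pos l : derivable_pt_lim (fun s => ln (Series (T 1 s))) 0 l -> 0 < l.
Proof.
  intros Hd.
  assert (Hl2 := ln2_pos).
  assert (Hlow : forall s, 0 < s < 1 -> s * ln 2 / 8 <= ln (Series (T 1 s))).
  { intros s Hs. assert (H := S1_lower s ltac:(lra)).
    set (x := s * ln 2 / 4) in *.
    assert (Hx : 0 <= x) by (unfold x; nra).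
    assert (Hx1 : x <= 1).
    { unfold x. assert (ln 2 < 1).
      { rewrite <- ln_exp with 1. apply ln_increasing; [lra|].
        assert (H1 := exp_ineq1 1 ltac:(lra)). lra. }
      nra. }
    apply Rle_trans with (ln (1 + x)); [|apply ln_le_mono; lra].
    assert (H1 := exp_ineq1_le (- ln (1 + x))).
    rewrite exp_Ropp, exp_ln in H1 by lra.
    assert (x / 2 <= 1 - / (1 + x)).
    { apply (Rmult_le_reg_r (2 * (1 + x))); [lra|].
      replace ((1 - / (1 + x)) * (2 * (1 + x))) with (2 * x) by (field; lra).
      replace (x / 2 * (2 * (1 + x))) with (x * (1 + x)) by field. nra. }
    replace (s * ln 2 / 8) with (x / 2) by (unfold x; field). lra. }
  destruct (Hd (ln 2 / 16) ltac:(lra)) as [del Hdel].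
  assert (Hdp := cond_pos del).
  set (s := Rmin (1/2) (del / 2)).
  assert (Hs0 : 0 < s) by (unfold s; apply Rmin_glb_lt; lra).
  assert (Hs1 : s <= 1/2) by (apply Rmin_l).
  assert (Hs2 : s <= del/2) by (apply Rmin_r).
  specialize (Hdel s ltac:(lra) ltac:(rewrite Rabs_right; lra)).
  rewrite Rplus_0_l, Series_T10, ln_1, Rminus_0_r in Hdel.
  specialize (Hlow s ltac:(lra)).
  assert (ln 2 / 8 <= ln (Series (T 1 s)) / s).
  { apply (Rmult_le_reg_r s); [lra|]. unfold Rdiv at 2. rewrite Rmult_assoc, Rinv_l by lra. lra. }
  apply Rabs_def2 in Hdel. lra.
Qed.

Lemma min_deriv (f : R -> R) l c : derivable_pt_lim f 0 l -> f 0 = 0 ->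
  (forall s, c * s <= f s) -> l = c.
Proof.
  intros Hd H0 Hf.
  destruct (Req_dec l c) as [|Hne]; auto. exfalso.
  assert (Hp : 0 < Rabs (l - c)) by (apply Rabs_pos_lt; lra).
  destruct (Hd (Rabs (l - c) / 2) ltac:(lra)) as [del Hdel].
  assert (Hdp := cond_pos del).
  assert (Ha := Hdel (del / 2) ltac:(lra) ltac:(rewrite Rabs_right; lra)).
  assert (Hb := Hdel (- (del / 2)) ltac:(lra) ltac:(rewrite Rabs_left; lra)).
  rewrite Rplus_0_l, H0, Rminus_0_r in Ha, Hb.
  assert (Ha' : c <= f (del / 2) / (del / 2)).
  { apply (Rmult_le_reg_r (del / 2)); [lra|]. unfold Rdiv at 2.
    rewrite Rmult_assoc, Rinv_l by lra. rewrite Rmult_1_r. apply Hf. }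
  assert (Hb' : f (- (del / 2)) / (- (del / 2)) <= c).
  { apply (Rmult_le_reg_r (del / 2)); [lra|].
    replace (f (- (del / 2)) / - (del / 2) * (del / 2)) with (- f (- (del / 2))) by (field; lra).
    specialize (Hf (- (del / 2))). lra. }
  apply Rabs_def2 in Ha. apply Rabs_def2 in Hb.
  destruct (Rlt_or_le l c) as [Hlc|Hlc].
  - rewrite Rabs_left in Ha by lra. lra.
  - rewrite Rabs_right in Hb by lra. lra.
Qed.

Lemma key xi0 (Hx0 : 0 < xi0)
  (Htan : forall q, xi0 * q <= P 1 q)
  (HP10 : P 1 0 = 0) xi t q :
  0 < xi -> inDtilde t q -> solves xi t q ->
  (0 < q -> xi0 <= xi) /\ (q < 0 -> xi <= xi0) /\ (q = 0 -> xi = xi0).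
Proof.
  intros Hxi [HD Ht] [Hs Hder].
  assert (Hge : P 1 q <= P t q).
  { destruct HD as [Htp | [Ht0 Hq]].
    - unfold P. apply (P_mono t q); [lra| apply T_ex_series; auto].
    - destruct (classic (ex_series (T t q))) as [He|He].
      + unfold P. apply (P_mono t q); [lra| auto].
      + exfalso. unfold P in Hs. change (ln (Series (T t q)) = q * xi) in Hs.
        rewrite Series_div in Hs; [|intros; left; apply T_pos| auto].
        assert (Hl0 : ln 0 = 0) by (unfold ln; destruct (Rlt_dec 0 0) as [r|]; [exfalso; exact (Rlt_irrefl 0 r)|reflexivity]).
        rewrite Hl0 in Hs. nra. }
  assert (Hq := Htan q).
  split; [intros; nra|]. split; [intros; nra|].
  intros ->.
  assert (Htp : 0 < t) by (destruct HD as [|[_ H]]; lra).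
  apply is_derive_Reals in Hder.
  apply (min_deriv (fun s => P t s)); auto.
  - rewrite Rmult_0_l in Hs. exact Hs.
  - intros s. apply Rle_trans with (P 1 s); auto.
    unfold P. apply (P_mono t s); [lra| apply T_ex_series; auto].
Qed.

Theorem proposition4p5
  (xi0 : R) (tf qf : R -> R)
  (Hxi0 : is_RInt_gen xi0_integrand (at_right 0) (at_point 1) xi0)
  (Hderiv : is_derive (fun s => P 1 s) 0 xi0)
  (Hsol : forall xi, 0 < xi -> inDtilde (tf xi) (qf xi) /\ solves xi (tf xi) (qf xi))
  (Huniq : forall xi t q, 0 < xi -> inDtilde t q -> solves xi t q ->
           t = tf xi /\ q = qf xi) :
  (forall xi, 0 < xi < xi0 -> qf xi < 0) /\
  qf xi0 = 0 /\
  (forall xi, xi0 < xi -> 0 < qf xi).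
Proof.
  assert (Hd : derivable_pt_lim (fun s => ln (Series (T 1 s))) 0 xi0)
    by (apply is_derive_Reals; exact Hderiv).
  assert (Hx0 := xi0_pos _ Hd).
  assert (HP10 : P 1 0 = 0).
  { unfold P. change (ln (Series (T 1 0)) = 0). rewrite Series_T10. apply ln_1. }
  assert (Htan : forall q, xi0 * q <= P 1 q).
  { intros q. assert (H := tangent _ _ Hd). unfold P. change (xi0 * q <= ln (Series (T 1 q))).
    assert (H0 : ln (Series (T 1 0)) = 0) by exact HP10.
    specialize (H ltac:(intros q' s Hs; apply holder; lra) q). lra. }
  split; [|split].
  - intros xi Hxi. destruct (Hsol xi ltac:(lra)) as [HD HS].
    destruct (key xi0 Hx0 Htan HP10 xi _ _ ltac:(lra) HD HS) as [H1 [H2 H3]].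
    destruct (Rtotal_order (qf xi) 0) as [|[|]]; auto.
    + specialize (H3 H). lra.
    + specialize (H1 H). lra.
  - destruct (Huniq xi0 1 0 Hx0) as [_ H]; auto.
    + split; [left; lra| lra].
    + split; [rewrite HP10; ring| exact Hderiv].
  - intros xi Hxi. destruct (Hsol xi ltac:(lra)) as [HD HS].
    destruct (key xi0 Hx0 Htan HP10 xi _ _ ltac:(lra) HD HS) as [H1 [H2 H3]].
    destruct (Rtotal_order (qf xi) 0) as [|[|]]; auto.
    + specialize (H2 H). lra.
    + specialize (H3 H). lra.
Qed.
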